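(* Let $k\ge2$, $n\ge k$, and $\beta=\sum_{i=1}^n i^{k-1}$. In the position-randomized auction setting described in the context, for every common initial bid sequence and every common permutation distribution used by the $k-1$ disadvantaged bidders, the adversary ${\mathcal A}$ has a position-randomized strategy under which the expected number of objects he wins is at least $\frac{\beta-1}{n^{k-1}}$.
   Context: Auction model: there are $k$ bidders, one adversary ${\mathcal A}$ and $k-1$ disadvantaged bidders, and $n$ objects auctioned simultaneously. Each object is won by the highest bidder on it; if $m$ bidders tie for the highest bid, each wins with probability $1/m$. A position-randomized bidding algorithm: a bidder chooses an initial sequence $x_1,\dots,x_n$ of positive reals with $\sum x_j\le 1$ (budget) and a probability distribution on permutations $\sigma$ of $\{1,\dots,n\}$; he draws $\sigma$ and bids $x_j$ on object $\sigma(j)$. All disadvantaged bidders use the same initial sequence and the same permutation distribution, drawing their permutations independently; ${\mathcal A}$ knows their algorithm, and his permutation is drawn independently of theirs. *)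

(* Defs.v *)
From mathcomp Require Import all_boot all_order all_algebra all_fingroup.
Set Implicit Arguments. Unset Strict Implicit. Unset Printing Implicit Defensive.
Import Order.TTheory GRing.Theory Num.Theory.
Local Open Scope ring_scope.

(* Objects are 'I_n; positions of the initial sequence are also 'I_n. *)

Definition is_bid_seq (R : realFieldType) (n : nat) (x : 'I_n -> R) : Prop :=
  (forall j, 0 < x j) /\ \sum_(j < n) x j <= 1.

Definition is_perm_distr (R : realFieldType) (n : nat) (p : {ffun 'S_n -> R}) : Prop :=
  (forall s, 0 <= p s) /\ \sum_(s : 'S_n) p s = 1.

(* bid on object o: the bidder bids x_j on object s(j), so on o he bids x_(s^-1 o) *)
Definition bid (R : realFieldType) (n : nat) (x : 'I_n -> R) (s : 'S_n) (o : 'I_n) : R :=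
  x ((s^-1)%g o).

(* probability that A (bid a) wins an object against the bids bs of the others:
   0 if someone bids strictly more, otherwise 1/(number of tied highest bidders) *)
Definition win_share (R : realFieldType) (m : nat) (a : R) (bs : 'I_m -> R) : R :=
  if [forall i, bs i <= a] then (1 + #|[set i | bs i == a]|%:R)^-1 else 0.

Definition expected_wins_A (R : realFieldType) (n m : nat)
    (x : 'I_n -> R) (p : {ffun 'S_n -> R}) (y : 'I_n -> R) (q : {ffun 'S_n -> R}) : R :=
  \sum_(sA : 'S_n) \sum_(ss : {ffun 'I_m -> 'S_n})
     (q sA * \prod_(i < m) p (ss i)) *
     \sum_(o < n) win_share (bid y sA o) (fun i => bid x (ss i) o).

(* Main.v *)
Require Import Defs.
From mathcomp Require Import all_boot all_order all_algebra all_fingroup.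
From mathcomp Require Import ring lra.
Import Order.TTheory GRing.Theory Num.Theory.
Local Open Scope ring_scope.

Lemma sum_ind1 (R : realFieldType) n (c : 'I_n) : \sum_(o < n) ((o == c)%:R : R) = 1.
Proof.
by rewrite (bigD1 c) //= eqxx big1 ?addr0 // => i /negbTE ->.
Qed.

Lemma cnt (R : realFieldType) n (j o : 'I_n) :
  (\sum_(s : 'S_n) ((((s^-1)%g o == j)%:R) : R)) * n%:R = #|{perm 'I_n}|%:R.
Proof.
have E : forall o', \sum_(s : 'S_n) ((((s^-1)%g o == j)%:R) : R)
                   = \sum_(s : 'S_n) ((((s^-1)%g o' == j)%:R) : R).
  move=> o'; rewrite (reindex_inj (@mulIg _ (tperm o' o))) /=.
  by apply: eq_bigr => s _; rewrite invMg tpermV permM tpermR.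
transitivity (\sum_(o' < n) \sum_(s : 'S_n) ((((s^-1)%g o' == j)%:R) : R)).
  by rewrite -(eq_bigr _ (fun o' _ => E o')) sumr_const card_ord mulr_natr.
rewrite exchange_big /= -sum1_card natr_sum; apply: eq_bigr => s _.
under eq_bigr do rewrite (canF_eq (permKV s)).
exact: sum_ind1.
Qed.

Lemma sumI2 (R : realFieldType) n (s : 'S_n) (A : {set 'I_n}) :
  \sum_(o < n) ((((s^-1)%g o) \in A)%:R : R) = #|A|%:R.
Proof.
rewrite (reindex_inj (@perm_inj _ s)) /=.
under eq_bigr do rewrite permK.
rewrite -sum1_card natr_sum [RHS]big_mkcond; apply: eq_bigr => l _.
by case: (l \in A).
Qed.

Lemma cheb (R : realFieldType) n m (a : 'I_n -> R) :
  (forall o, 0 <= a o) ->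
  (\sum_o a o) * (\sum_o a o ^+ m) <= n%:R * \sum_o a o ^+ m.+1.
Proof.
move=> a0.
have H : 0 <= \sum_o \sum_o' (a o - a o') * (a o ^+ m - a o' ^+ m).
  apply: sumr_ge0 => o _; apply: sumr_ge0 => o' _.
  have [le|le] := lerP (a o) (a o').
    have := lerXn2r m (a0 o) (a0 o') le.
    by move=> h; apply: mulr_le0; lra.
  have := lerXn2r m (a0 o') (a0 o) (ltW le).
  by move=> h; apply: mulr_ge0; lra.
have E : \sum_o \sum_o' (a o - a o') * (a o ^+ m - a o' ^+ m)
   = (n%:R * \sum_o a o ^+ m.+1) *+ 2 - ((\sum_o a o) * (\sum_o a o ^+ m)) *+ 2.
  transitivity (\sum_o \sum_o' ((a o ^+ m.+1 + a o' ^+ m.+1) - (a o * a o' ^+ m + a o' * a o ^+ m))).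
    by apply: eq_bigr => o _; apply: eq_bigr => o' _; rewrite !exprS; ring.
  under eq_bigr do rewrite sumrB !big_split /=.
  rewrite sumrB !big_split /=.
  have e1 : \sum_(i < n) \sum_(i0 < n) a i ^+ m.+1 = n%:R * \sum_o a o ^+ m.+1.
    by rewrite mulr_sumr; apply: eq_bigr => i _; rewrite sumr_const card_ord mulr_natl.
  have e2 : \sum_(i < n) \sum_(i0 < n) a i0 ^+ m.+1 = n%:R * \sum_o a o ^+ m.+1.
    by rewrite sumr_const card_ord mulr_natl.
  have e3 : \sum_(i < n) \sum_(i0 < n) a i * a i0 ^+ m = (\sum_o a o) * (\sum_o a o ^+ m).
    by rewrite mulr_suml; apply: eq_bigr => i _; rewrite mulr_sumr.
  have e4 : \sum_(i < n) \sum_(i0 < n) a i0 * a i ^+ m = (\sum_o a o) * (\sum_o a o ^+ m).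
    by rewrite mulrC mulr_suml; apply: eq_bigr => i _; rewrite mulr_sumr; apply: eq_bigr => j _; rewrite mulrC.
  rewrite e1 e2 e3 e4; ring.
move: H; rewrite E; rewrite !mulr2n; lra.
Qed.


Lemma pmean (R : realFieldType) n m (a : 'I_n -> R) :
  (forall o, 0 <= a o) ->
  (\sum_o a o) ^+ m.+1 <= n%:R ^+ m * \sum_o a o ^+ m.+1.
Proof.
move=> a0; elim: m => [|m IH]; first by rewrite expr0 mul1r; exact: lexx.
have S0 : 0 <= \sum_o a o by apply: sumr_ge0.
rewrite exprS.
apply: le_trans (ler_wpM2l S0 IH) _.
rewrite mulrCA exprS (mulrC n%:R) -mulrA.
apply: ler_wpM2l; first by apply: exprn_ge0; apply: ler0n.
exact: cheb.
Qed.

Section Rank.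
Variables (R : realFieldType) (n : nat) (x : 'I_n -> R).

Definition S (j : 'I_n) : {set 'I_n} :=
  [set l | (x l < x j) || ((x l == x j) && (l <= j)%N)].
Definition rk j := #|S j|.

Lemma S_refl j : j \in S j.
Proof. by rewrite inE eqxx leqnn orbT. Qed.

Lemma S_le j l : l \in S j -> x l <= x j.
Proof. by rewrite inE => /orP [/ltW|/andP [/eqP -> _]]. Qed.

Lemma S_trans j l : l \in S j -> S l \subset S j.
Proof.
rewrite inE => Hl; apply/subsetP => i; rewrite !inE.
case/orP: Hl => [Hl|/andP [/eqP Hl Hl']].
  case/orP => [Hi|/andP [/eqP -> _]]; last by rewrite Hl.
  by rewrite (lt_trans Hi Hl).
rewrite Hl; case/orP => [->//|/andP [-> Hi]].
by rewrite (leq_trans Hi Hl') orbT.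
Qed.

Lemma S_total j l : (l \in S j) || (j \in S l).
Proof.
rewrite !inE; have [h|h|h] := ltgtP (x l) (x j).
- by [].
- by rewrite orbT.
- by rewrite /= leq_total.
Qed.

Lemma S_anti j l : l \in S j -> j \in S l -> l = j.
Proof.
rewrite !inE => H1 H2.
have [h|h|h] := ltgtP (x l) (x j).
- by move: H2; rewrite (lt_gtF h) eq_sym (lt_eqF h).
- by move: H1; rewrite (lt_gtF h) (gt_eqF h).
move: H1 H2; rewrite h eqxx ltxx /= => a b.
by apply/val_inj/eqP; rewrite eqn_leq a b.
Qed.

Lemma rk_inj : injective rk.
Proof.
move=> j l E; apply/eqP/negPn/negP => ne.
have lt : forall a b, a != b -> b \in S a -> (rk b < rk a)%N.
  move=> a b nab Hb; apply: proper_card; rewrite properEneq S_trans // andbT.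
  apply/negP => /eqP E'; move: (S_refl a); rewrite -E' => Ha.
  by move/eqP: nab; apply; apply: S_anti.
case/orP: (S_total j l) => H.
  by move: (lt j l ne H); rewrite E ltnn.
have ne' : l != j by rewrite eq_sym.
by move: (lt l j ne' H); rewrite E ltnn.
Qed.

Lemma rk_gt0 j : (0 < rk j)%N.
Proof. by apply/card_gt0P; exists j; apply: S_refl. Qed.

Lemma rk_lt j : ((rk j).-1 < n)%N.
Proof.
have : (rk j <= n)%N by rewrite /rk -[X in (_ <= X)%N]card_ord max_card.
by case: (rk j) (rk_gt0 j).
Qed.

Definition frk j : 'I_n := Ordinal (rk_lt j).

Lemma frk_inj : injective frk.
Proof.
move=> j l /(congr1 val) /= E; apply: rk_inj.
by rewrite -(prednK (rk_gt0 j)) E prednK // rk_gt0.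
Qed.

Lemma rk_sum (F : nat -> R) : \sum_j F (rk j) = \sum_(i < n) F i.+1.
Proof.
rewrite [RHS](reindex_inj frk_inj) /=; apply: eq_bigr => j _.
by rewrite prednK // rk_gt0.
Qed.

Lemma rk_min : (0 < n)%N -> exists j0, rk j0 = 1%N.
Proof.
move=> n0; have [g _ fg] := injF_bij frk_inj.
exists (g (Ordinal n0)); have := congr1 val (fg (Ordinal n0)) => /=.
by move: (rk_gt0 (g (Ordinal n0))); case: (rk _) => // [[|]].
Qed.
End Rank.
Arguments S {R n} x j.
Arguments rk {R n} x j.
Arguments rk_min {R n} x.
Arguments S_le {R n x j l}.


Lemma win_ge0 (R : realFieldType) m (a : R) (bs : 'I_m -> R) : 0 <= win_share a bs.
Proof. by rewrite /win_share; case: ifP => // _; rewrite invr_ge0 addr_ge0 // ler0n. Qed.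

Lemma win_1 (R : realFieldType) m (a : R) (bs : 'I_m -> R) :
  (forall i, bs i < a) -> win_share a bs = 1.
Proof.
move=> H; rewrite /win_share.
have -> : [forall i, bs i <= a] by apply/forallP => i; exact: ltW.
suff -> : #|[set i | bs i == a]| = 0%N by rewrite addr0 invr1.
apply/eqP; rewrite cards_eq0; apply/eqP/setP => i; rewrite !inE.
by rewrite lt_eqF.
Qed.

Lemma point (R : realFieldType) n m (x y : 'I_n -> R) (j0 : 'I_n) (T : 'I_n -> {set 'I_n})
  (sA : 'S_n) (ss : {ffun 'I_m -> 'S_n}) (o : 'I_n) :
  (forall j l, j != j0 -> l \in T j -> x l < y j) ->
  \sum_(j | j != j0) (((sA^-1)%g o == j)%:R * \prod_i ((((ss i)^-1)%g o \in T j)%:R : R))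
   <= win_share (bid y sA o) (fun i => bid x (ss i) o).
Proof.
move=> Hxy; set a := (sA^-1)%g o.
have [ea|na] := eqVneq a j0.
  rewrite big1 ?win_ge0 // => j nj.
  have -> : (a == j) = false by apply/eqP => e; move: nj; rewrite -e ea eqxx.
  by rewrite mul0r.
rewrite (bigD1 a) //= eqxx mul1r [X in _ + X]big1 ?addr0; last first.
  by move=> j /andP [_ nj]; rewrite eq_sym (negbTE nj) mul0r.
have [all|] := boolP [forall i, ((ss i)^-1)%g o \in T a].
  rewrite big1; last by move=> i _; rewrite (forallP all i).
  rewrite win_1 // => i; rewrite /bid; apply: Hxy => //; exact: (forallP all i).
rewrite negb_forall => /existsP [i ni].
by rewrite (bigD1 i) //= (negbTE ni) mul0r win_ge0.
Qed.

Lemma sum4 (R : realFieldType) (I J K L : finType) (P : pred I) (F : I -> J -> K -> L -> R) :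
  \sum_(i | P i) \sum_j \sum_k \sum_l F i j k l = \sum_k \sum_l \sum_j \sum_(i | P i) F i j k l.
Proof.
transitivity (\sum_(i | P i) \sum_k \sum_l \sum_j F i j k l).
  apply: eq_bigr => i _.
  transitivity (\sum_k \sum_j \sum_l F i j k l); first exact: exchange_big.
  apply: eq_bigr => k _; exact: exchange_big.
transitivity (\sum_k \sum_(i | P i) \sum_l \sum_j F i j k l); first exact: exchange_big.
apply: eq_bigr => k _.
transitivity (\sum_l \sum_(i | P i) \sum_j F i j k l); first exact: exchange_big.
apply: eq_bigr => l _; exact: exchange_big.
Qed.

Lemma core (R : realFieldType) n m (x y : 'I_n -> R) (p q : {ffun 'S_n -> R})
  (j0 : 'I_n) (T : 'I_n -> {set 'I_n}) :
  (forall s, 0 <= p s) -> (forall s, 0 <= q s) ->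
  (forall j l, j != j0 -> l \in T j -> x l < y j) ->
  \sum_(j | j != j0) \sum_o
     (\sum_(sA : 'S_n) q sA * (((sA^-1)%g o == j)%:R))
     * (\sum_(s : 'S_n) p s * ((((s^-1)%g o) \in T j)%:R)) ^+ m
  <= expected_wins_A m x p y q.
Proof.
move=> p0 q0 Hxy.
apply: (@le_trans _ _ (\sum_(sA : 'S_n) \sum_(ss : {ffun 'I_m -> 'S_n})
     (q sA * \prod_(i < m) p (ss i)) *
     \sum_o \sum_(j | j != j0) (((sA^-1)%g o == j)%:R * \prod_i ((((ss i)^-1)%g o \in T j)%:R : R)))); last first.
  apply: ler_sum => sA _; apply: ler_sum => ss _; apply: ler_wpM2l.
    by apply: mulr_ge0 => //; apply: prodr_ge0.
  by apply: ler_sum => o _; apply: point.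
rewrite le_eqVlt; apply/orP; left; apply/eqP.
transitivity (\sum_(j | j != j0) \sum_o \sum_(sA : 'S_n) \sum_(ss : {ffun 'I_m -> 'S_n})
   (q sA * \prod_(i < m) p (ss i)) * (((sA^-1)%g o == j)%:R * \prod_i ((((ss i)^-1)%g o \in T j)%:R : R))).
  apply: eq_bigr => j _; apply: eq_bigr => o _.
  have E : (\sum_(s : 'S_n) p s * ((((s^-1)%g o) \in T j)%:R)) ^+ m
     = \sum_(ss : {ffun 'I_m -> 'S_n}) \prod_(i < m) (p (ss i) * ((((ss i)^-1)%g o \in T j)%:R)).
    transitivity (\prod_(i < m) \sum_(s : 'S_n) p s * ((((s^-1)%g o) \in T j)%:R)).
      by rewrite prodr_const card_ord.
    exact: bigA_distr_bigA.
  rewrite E mulr_suml; apply: eq_bigr => sA _.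
  rewrite mulr_sumr; apply: eq_bigr => ss _.
  rewrite big_split /=; ring.
rewrite sum4; apply: eq_bigr => sA _; apply: eq_bigr => ss _.
rewrite mulr_sumr; apply: eq_bigr => o _.
by rewrite mulr_sumr.
Qed.

Theorem lemma4p2 (R : realFieldType) (k n : nat) :
  (2 <= k)%N -> (k <= n)%N ->
  forall (x : 'I_n -> R) (p : {ffun 'S_n -> R}),
    is_bid_seq x -> is_perm_distr p ->
    exists (y : 'I_n -> R) (q : {ffun 'S_n -> R}),
      [/\ is_bid_seq y, is_perm_distr q &
        ((\sum_(1 <= i < n.+1) i ^ k.-1)%N%:R - 1) / (n ^ k.-1)%N%:R
          <= expected_wins_A k.-1 x p y q].
Proof.
move=> hk hkn x p [xpos xsum] [p0 psum].
have n0 : (0 < n)%N by apply: leq_trans hkn; apply: leq_trans hk.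
have [m' em] : exists m', k.-1 = m'.+1 by exists k.-2; case: k hk {hkn} => [|[|k]].
rewrite em.
have [j0 rj0] := rk_min x n0.
set d := x j0 / (2 * n%:R).
have nR : 0 < (n%:R : R) by rewrite ltr0n.
have d0 : 0 < d by apply: divr_gt0 => //; apply: mulr_gt0.
have nd : n%:R * d = x j0 / 2.
  by rewrite /d; field; rewrite gt_eqF.
pose y := fun j => if j == j0 then x j0 / 2 else x j + d.
pose q : {ffun 'S_n -> R} := [ffun s => (#|{perm 'I_n}|%:R)^-1].
have cS : (0 < #|{perm 'I_n}|)%N by rewrite card_Sn fact_gt0.
have cSR : (#|{perm 'I_n}|%:R : R) != 0 by rewrite pnatr_eq0 -lt0n.
exists y, q; split.
- split.
    move=> j; rewrite /y; case: eqP => _.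
      by apply: divr_gt0 => //; apply: xpos.
    by apply: addr_gt0.
  rewrite (bigD1 j0) //= /y eqxx.
  have H1 : \sum_(j < n | j != j0) (if j == j0 then x j0 / 2 else x j + d)
          = \sum_(j < n | j != j0) x j + \sum_(j < n | j != j0) d.
    by rewrite -big_split; apply: eq_bigr => j /negbTE ->.
  have H2 : \sum_(j < n | j != j0) d <= n%:R * d.
    have -> : n%:R * d = \sum_(j < n) d by rewrite sumr_const card_ord mulr_natl.
    rewrite [X in _ <= X](bigD1 j0) //=; rewrite lerDr; exact: ltW.
  have H3 : \sum_j x j = x j0 + \sum_(j < n | j != j0) x j by rewrite (bigD1 j0).
  rewrite H1; move: H2 H3; rewrite nd => H2 H3; lra.
- split; first by move=> s; rewrite ffunE invr_ge0 ler0n.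
  rewrite (eq_bigr (fun _ => (#|{perm 'I_n}|%:R)^-1)); last by move=> s _; rewrite ffunE.
  by rewrite sumr_const -[_ *+ _]mulr_natr; apply: mulVf.
have Hxy : forall j l, j != j0 -> l \in S x j -> x l < y j.
  move=> j l nj Hl; rewrite /y (negbTE nj).
  by apply: le_lt_trans (S_le Hl) _; rewrite ltrDl.
have q0 : forall s, 0 <= q s by move=> s; rewrite ffunE invr_ge0 ler0n.
apply: le_trans (core R n m'.+1 x y p q j0 (S x) p0 q0 Hxy).
have A : forall j o, \sum_(sA : 'S_n) q sA * (((sA^-1)%g o == j)%:R) = n%:R^-1.
  move=> j o; under eq_bigr do rewrite ffunE; rewrite -mulr_sumr.
  have c := cnt R n j o.
  have cn : \sum_(s : 'S_n) ((((s^-1)%g o == j)%:R) : R) != 0.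
    by apply/eqP => e; move: cSR; rewrite -c e mul0r eqxx.
  rewrite -c; field; rewrite cn /= gt_eqF //.
have P : forall j, \sum_o \sum_(s : 'S_n) p s * ((((s^-1)%g o) \in S x j)%:R) = (rk x j)%:R.
  move=> j; rewrite exchange_big /=.
  under eq_bigr do rewrite -mulr_sumr sumI2.
  by rewrite -mulr_suml psum mul1r.
apply: (@le_trans _ _ (\sum_(j | j != j0) ((rk x j)%:R ^+ m'.+1 / n%:R ^+ m'.+1))); last first.
  apply: ler_sum => j _.
  under eq_bigr do rewrite A; rewrite -mulr_sumr.
  have h := pmean R n m' (fun o => \sum_(s : 'S_n) p s * ((((s^-1)%g o) \in S x j)%:R))
              (fun o => sumr_ge0 _ (fun s _ => mulr_ge0 (p0 s) (ler0n _ _))).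
  rewrite /= P in h.
  set Z := \sum_o _ in h *.
  rewrite [n%:R ^+ m'.+1]exprS ler_pdivrMr; last by apply: mulr_gt0 => //; apply: exprn_gt0.
  rewrite (_ : n%:R^-1 * Z * (n%:R * n%:R ^+ m') = n%:R ^+ m' * Z) //.
  by field; rewrite gt_eqF.
rewrite -mulr_suml natrX; apply: ler_wpM2r.
  by rewrite invr_ge0; apply: exprn_ge0; apply: ler0n.
have B : (\sum_(1 <= i < n.+1) i ^ m'.+1)%:R = \sum_j ((rk x j)%:R ^+ m'.+1 : R).
  rewrite (rk_sum R n x (fun r => (r%:R ^+ m'.+1 : R))) natr_sum big_add1 /= big_mkord.
  by apply: eq_bigr => i _; rewrite natrX.
rewrite B (bigD1 j0) //= rj0 expr1n addrC addrK; exact: lexx.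
Qed.
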